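(* Let $G_M$ be a maximal reducible graph solved by a line-tree $T_M$. Then the line-tree $T_1$ obtained from $T_M$ by inverting the entire tree is a persistent phylogeny solving $G_M$.
   Context: Persistent phylogeny. Let $M$ be a binary matrix with rows indexed by species $S$ and columns by characters $C=\{c_1,\dots,c_m\}$, and $A\subseteq C$ (active characters). A persistent phylogeny for $(M,A)$ is a rooted tree $T$ whose nodes $x$ carry vectors $l_x\in\{0,1\}^m$ (the state of $x$) such that: the root $r$ has $l_r[j]=1$ iff $c_j\in A$; each edge is labelled $c_j^+$ for each character changing from 0 to 1 on it and $c_j^-$ for each changing from 1 to 0; each character changes state on at most two edges, and if on two, they lie on one root-to-leaf path with the gain $c_j^+$ closer to the root than the loss $c_j^-$; each row of $M$ equals $l_x$ for some node $x$ (such a node is a species node of $T$). Red-black graphs. A red-black graph on species $S$ and characters $C$ is a bipartite graph on $S\cup C$ with red or black edges, each character incident only to black edges (inactive) or only to red edges (active). Its associated matrix has $M[s,c]=1$ iff $(s,c)$ is black, or $c$ is active and $(s,c)$ is not an edge; a tree solving the graph is a persistent phylogeny for (associated matrix, set of active characters). $S(c)=\{s:M[s,c]=1\}$. Realizing $c^+$ ($c$ inactive): with $D(c)$ the species of the component of $c$, add red edges from $c$ to $D(c)\setminus N(c)$, delete black edges on $c$ and isolated vertices; realizing $c^-$ ($c$ active, $D(c)\subseteq N(c)$): delete all edges on $c$ and isolated vertices. An active character red-adjacent to all species is free. A c-reduction $\langle c_1^+,\dots,c_k^+\rangle$ is successful if realizing the characters in order is always defined (realizing negatively each character right after it becomes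 free) and yields the empty graph. A red-black graph is reducible if it is connected and admits a successful reduction (i.e. is solved by some persistent phylogeny). Standing assumption: no free, null (isolated) or universal (inactive and black-adjacent to all species) characters, no species with no characters, no two identical character columns. An inactive character $c$ is maximal if no inactive $c'$ has $S(c)\subsetneq S(c')$. A maximal reducible graph is a reducible red-black graph all of whose characters are inactive and maximal. Line-trees and inversion. A line-tree is a tree consisting of a single path from the root (internal nodes have one child). A simple path may be contracted into one edge labelled by the sequence of labels on it. If $T_1$ is a line-tree whose sequence of species in depth-first order is $s_1,\dots,s_k$, the inverted tree $T_2$ is the line-tree with species sequence $s_k,\dots,s_1$, where the edge $(s_{i+1},s_i)$ of $T_2$ carries the same characters as the edge $(s_i,s_{i+1})$ of $T_1$ but with opposite signs (each $c^+$ becomes $c^-$ and vice versa). *)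

(* Defs.v *)
From mathcomp Require Import all_boot.
Set Implicit Arguments. Unset Strict Implicit. Unset Printing Implicit Defensive.

(* Nodes are 'I_n.+1, the root is ord0, par gives the parent; lab x is l_x. *)
Record ptree (C : finType) := PTree {
  pt_n : nat;
  pt_par : 'I_pt_n.+1 -> 'I_pt_n.+1;
  pt_lab : 'I_pt_n.+1 -> {ffun C -> bool} }.
Arguments pt_n {C} p.
Arguments pt_par {C} p _.
Arguments pt_lab {C} p _.
Arguments PTree {C} pt_n pt_par pt_lab.

Section Phylo.
Variables (S C : finType).

(* par is a rooted-tree parent function: root is its own "parent" (fixpoint),
   every other node has a parent of smaller index (hence acyclic, connected). *)
Definition is_rooted_tree (T : ptree C) : Prop :=
  pt_par T ord0 = ord0 /\ forall i, i != ord0 -> pt_par T i < i.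

Unset Implicit Arguments.
Definition anc (T : ptree C) (i j : 'I_(pt_n T).+1) : Prop :=
  exists k, iter k (pt_par T) j = i.

(* character c changes state on the edge (par i, i) *)
Definition changes (T : ptree C) (c : C) (i : 'I_(pt_n T).+1) : bool :=
  (i != ord0) && (pt_lab T (pt_par T i) c != pt_lab T i c).

Set Implicit Arguments.
(* the label c^+ (gain) is on edge i iff changes c i and l_i[c] = 1;
   c^- (loss) iff changes c i and l_i[c] = 0. *)
Definition persistent_phylogeny (M : S -> C -> bool) (A : {set C}) (T : ptree C) : Prop :=
  [/\ is_rooted_tree T,
      (forall c, pt_lab T ord0 c = (c \in A)),
      (forall c, #|[set i | changes T c i]| <= 2),
      (forall c i j, changes T c i -> changes T c j -> i != j ->
          (anc T i j /\ pt_lab T i c /\ ~~ pt_lab T j c) \/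
          (anc T j i /\ pt_lab T j c /\ ~~ pt_lab T i c))
    & (forall s, exists x, forall c, pt_lab T x c = M s c)].

(* Vertex set S + C; rb_edge s c says (s,c) is an edge; its colour is red iff
   c is active (c \in rb_active), black otherwise. *)
Record rbgraph := RBGraph { rb_edge : S -> C -> bool; rb_active : {set C} }.

Definition assoc_matrix (G : rbgraph) (s : S) (c : C) : bool :=
  if c \in rb_active G then ~~ rb_edge G s c else rb_edge G s c.

Definition solves (T : ptree C) (G : rbgraph) : Prop :=
  persistent_phylogeny (assoc_matrix G) (rb_active G) T.

Definition rb_adj (G : rbgraph) : rel (S + C) :=
  fun u v => match u, v with
             | inl s, inr c => rb_edge G s c
             | inr c, inl s => rb_edge G s c
             | _, _ => false end.

Definition rb_connected (G : rbgraph) : Prop :=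
  forall u v : S + C, connect (rb_adj G) u v.

Definition Sc (G : rbgraph) (c : C) : {set S} := [set s | assoc_matrix G s c].

Definition standing (G : rbgraph) : Prop :=
  [/\
      (forall c, c \in rb_active G -> ~ (forall s, rb_edge G s c)),
      (forall c, exists s, rb_edge G s c),
      (forall c, c \notin rb_active G -> ~ (forall s, rb_edge G s c)),
      (forall s, exists c, rb_edge G s c)
    &
      (forall c c', (forall s, assoc_matrix G s c = assoc_matrix G s c') -> c = c')].

Definition reducible (G : rbgraph) : Prop :=
  rb_connected G /\ exists T : ptree C, solves T G.

Definition maximal_char (G : rbgraph) (c : C) : Prop :=
  c \notin rb_active G /\
  ~ exists c', c' \notin rb_active G /\ Sc G c \proper Sc G c'.

Definition maximal_reducible (G : rbgraph) : Prop :=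
  [/\ reducible G, (forall c, c \notin rb_active G) & (forall c, maximal_char G c)].

(* A line-tree is given by the sequence of states of its nodes from the root
   down to the leaf; node i has parent i-1. *)
Definition line_tree (ls : seq {ffun C -> bool}) : ptree C :=
  PTree (size ls).-1 (fun i => inord i.-1) (fun i => nth [ffun=> false] ls i).

(* Inversion of the entire line-tree: the node sequence is reversed (so every
   edge keeps its characters with opposite signs), and a new root with the
   all-zero state (no active characters) is put on top. *)
Definition invert_line (ls : seq {ffun C -> bool}) : seq {ffun C -> bool} :=
  [ffun=> false] :: rev ls.

End Phylo.
Arguments anc {C} T i j.
Arguments changes {C} T c i.

(* Main.v *)
Require Import Defs.
From mathcomp Require Import all_boot.
From mathcomp Require Import zify.

Set Implicit Arguments. Unset Strict Implicit. Unset Printing Implicit Defensive.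

Section H.
Variable C : finType.
Implicit Types ls : seq {ffun C -> bool}.

Definition col ls (c : C) k := nth [ffun=> false] ls k c.

Lemma par_val ls (i : 'I_(pt_n (line_tree ls)).+1) :
  nat_of_ord (pt_par (line_tree ls) i) = i.-1.
Proof.
rewrite /= inordK //; have := ltn_ord i; rewrite /=; lia.
Qed.

Lemma changesE ls c (i : 'I_(pt_n (line_tree ls)).+1) :
  changes (line_tree ls) c i = (0 < i) && (col ls c i.-1 != col ls c i).
Proof.
rewrite /changes /col -(par_val i); congr (_ && _).
by rewrite lt0n -val_eqE.
Qed.

Lemma iter_val ls k (j : 'I_(pt_n (line_tree ls)).+1) :
  nat_of_ord (iter k (pt_par (line_tree ls)) j) = j - k.
Proof.
elim: k => [|k IH]; first by rewrite subn0.
by rewrite iterS par_val IH; lia.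
Qed.

Definition convex (b : nat -> bool) :=
  forall i j k, i < j -> j < k -> b i -> b k -> b j.

Lemma pat (b : nat -> bool) i j : convex b -> 0 < i -> i < j ->
  b i.-1 != b i -> b j.-1 != b j -> b i && ~~ b j.
Proof.
move=> cv i0 ij.
case Hi: (b i); case Hj: (b j) => //=.
- case Hj1: (b j.-1) => // _ _.
  have ij1 : i < j.-1.
    case: (ltngtP i j.-1) => //; first lia.
    by move=> E; rewrite -E Hi in Hj1.
  by rewrite (cv i j.-1 j) // in Hj1; lia.
- case Hi1: (b i.-1) => // _ _.
  by rewrite (cv i.-1 i j) // in Hi; lia.
- case Hi1: (b i.-1) => // _; case Hj1: (b j.-1) => // _.
  have ij1 : i < j.-1.
    case: (ltngtP i j.-1) => //; first lia.
    by move=> E; rewrite -E Hi in Hj1.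
  by rewrite (cv i.-1 i j.-1) // in Hi; lia.
Qed.

Lemma ivt (b : nat -> bool) p q : p < q -> b p != b q ->
  exists m, [/\ p < m, m <= q & b m.-1 != b m].
Proof.
elim: q => [|q IH] //; rewrite ltnS leq_eqVlt => /orP [/eqP <- | pq] bpq.
  by exists p.+1; split.
case E: (b q == b q.+1).
  have bpq' : b p != b q by rewrite (eqP E).
  have [m [h1 h2 h3]] := IH pq bpq'.
  by exists m; split => //; lia.
by exists q.+1; split => //; [lia | rewrite /= E].
Qed.

Lemma Hin_lem ls c m : 0 < m -> m <= (size ls).-1 -> col ls c m.-1 != col ls c m ->
   (inord m : 'I_(pt_n (line_tree ls)).+1) \in [set i | changes (line_tree ls) c i].
Proof.
move=> h1 h2 h3; have h4 : m < ((size ls).-1).+1 by rewrite ltnS.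
by rewrite inE changesE inordK ?h1.
Qed.

Lemma ne_lem ls m m' : m <= (size ls).-1 -> m' <= (size ls).-1 -> m < m' ->
   (inord m : 'I_(pt_n (line_tree ls)).+1) != inord m'.
Proof.
move=> h2 h3 h4; rewrite -val_eqE /= !inordK ?ltnS //.
by rewrite neq_ltn h4.
Qed.

Lemma line_convex ls c :
  col ls c 0 = false ->
  #|[set i | changes (line_tree ls) c i]| <= 2 ->
  convex (col ls c).
Proof.
move=> b0 card i j k ij jk bi bk; apply/negP => /negP bj.
have kn : k <= (size ls).-1.
  move: bk; rewrite /col; case: (ltnP k (size ls)) => [h _|h]; first by clear -h; lia.
  by rewrite nth_default // ffunE.
have i0 : 0 < i by case: i ij bi => //; rewrite b0.
have e1 : col ls c 0 != col ls c i by rewrite b0 bi.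
have e2 : col ls c i != col ls c j by rewrite bi (negbTE bj).
have e3 : col ls c j != col ls c k by rewrite bk (negbTE bj).
have [m1 [a1 a2 a3]] := @ivt (col ls c) 0 i i0 e1.
have [m2 [c1 c2 c3]] := @ivt (col ls c) i j ij e2.
have [m3 [d1 d2 d3]] := @ivt (col ls c) j k jk e3.
have [o1 o2 o3 o4 o5] : [/\ 0 < m2, 0 < m3, m1 < m2, m2 < m3 & m3 <= (size ls).-1].
  by split; clear -a1 a2 c1 c2 d1 d2 ij jk kn; lia.
have o6 : m1 <= (size ls).-1 by clear -o3 o4 o5; lia.
have o7 : m2 <= (size ls).-1 by clear -o3 o4 o5; lia.
have o8 : m1 < m3 by clear -o3 o4; lia.
have : 2 < #|[set i | changes (line_tree ls) c i]|; last by rewrite ltnNge card.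
apply/card_gt2P.
exists (inord m1), (inord m2), (inord m3); split; first split.
- exact: Hin_lem.
- exact: Hin_lem.
- exact: Hin_lem.
split; first exact: ne_lem.
  exact: ne_lem.
by rewrite eq_sym; apply: ne_lem.
Qed.

Lemma line_conds ls c : convex (col ls c) ->
  #|[set i | changes (line_tree ls) c i]| <= 2 /\
  (forall i j, changes (line_tree ls) c i -> changes (line_tree ls) c j -> i != j ->
          (anc (line_tree ls) i j /\ pt_lab (line_tree ls) i c /\ ~~ pt_lab (line_tree ls) j c) \/
          (anc (line_tree ls) j i /\ pt_lab (line_tree ls) j c /\ ~~ pt_lab (line_tree ls) i c)).
Proof.
move=> cv.
have key : forall i j : 'I_(pt_n (line_tree ls)).+1,
    changes (line_tree ls) c i -> changes (line_tree ls) c j -> i < j ->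
    anc (line_tree ls) i j /\ pt_lab (line_tree ls) i c /\ ~~ pt_lab (line_tree ls) j c.
  move=> i j; rewrite !changesE => /andP [i0 ci] /andP [j0 cj] ij.
  have /andP [h1 h2] := pat cv i0 ij ci cj.
  split; last by split.
  exists (j - i); apply: val_inj => /=; by rewrite iter_val subKn // ltnW.
split.
  rewrite leqNgt; apply/negP => /card_gt2P [x [y [z [[xA yA zA] [xy yz zx]]]]].
  move: xA yA zA; rewrite !inE => xA yA zA.
  have D : forall u v : 'I_(pt_n (line_tree ls)).+1,
      changes (line_tree ls) c u -> changes (line_tree ls) c v -> u != v ->
      pt_lab (line_tree ls) u c != pt_lab (line_tree ls) v c.
    move=> u v uA vA; rewrite -val_eqE /= => uv.
    case: (ltngtP u v) uv => // h _.
      by have [_ [-> /negbTE ->]] := key u v uA vA h.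
    by have [_ [-> /negbTE ->]] := key v u vA uA h.
  move: (D x y xA yA xy) (D y z yA zA yz) (D z x zA xA zx).
  by case: (pt_lab _ x c); case: (pt_lab _ y c); case: (pt_lab _ z c).
move=> i j ci cj ij; case: (ltngtP i j) => h.
- by left; apply: key.
- by right; apply: key.
- by move: ij; rewrite -val_eqE /= h eqxx.
Qed.

End H.

Theorem lemma3 (S C : finType) (G : rbgraph S C) (TM : seq {ffun C -> bool}) :
  standing G ->
  maximal_reducible G ->
  solves (line_tree TM) G ->
  solves (line_tree (invert_line TM)) G.
Proof.
move=> _ [_ inact _] [_ root card _ sp].
have cvTM : forall c, convex (col TM c).
  move=> c; apply: line_convex => //.
  by have := root c; rewrite /col /= => ->; rewrite (negbTE (inact c)).
have cvI : forall c, convex (col (invert_line TM) c).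
  move=> c i j k ij jk; rewrite /col /invert_line.
  case: i ij => [|i] ij; first by rewrite /= ffunE.
  case: j ij jk => [|j] // ij jk; case: k jk => [|k] // jk /=.
  case: (ltnP k (size TM)) => hk.
    2: by move=> _; rewrite [nth _ _ k]nth_default ?size_rev // ffunE.
  have hj : j < size TM by clear -jk hk; lia.
  have hi : i < size TM by clear -ij jk hk; lia.
  rewrite !nth_rev //.
  move=> bi bk; apply: (cvTM c (size TM - k.+1) _ (size TM - i.+1)) => //;
    clear -ij jk hk hj hi; lia.
split.
- split; first by apply: val_inj => /=; rewrite inordK.
  move=> i; rewrite -val_eqE /= => h; rewrite inordK.
    by move: h; case: (nat_of_ord i).
  exact: leq_ltn_trans (leq_pred _) (ltn_ord i).
- by move=> c; rewrite /= ffunE (negbTE (inact c)).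
- by move=> c; case: (line_conds (cvI c)).
- by move=> c; case: (line_conds (cvI c)).
move=> s; have [x Hx] := sp s.
have xb : size TM - x < (pt_n (line_tree (invert_line TM))).+1.
  by rewrite /= size_rev; lia.
exists (Ordinal xb) => c; rewrite -Hx /= /invert_line.
case: (ltnP x (size TM)) => h.
  case E: (size TM - x) => [|m]; first lia.
  rewrite /= nth_rev; last lia.
  have -> // : size TM - m.+1 = x by clear -E h; lia.
have -> : size TM - x = 0 by clear -h; lia.
by rewrite /= nth_default.
Qed.
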